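(* Let $\Sigma\subset\mathbb{R}^d$ be an open set with coordinates $\xi^a$, $M\subset\mathbb{R}^D$ open with coordinates $X^\mu$, $V$ a smooth volume metric on $M$, and $X:\Sigma\to M$ a smooth map with $\gamma_v>0$ on $\Sigma$. Let $F$ be a $C^2$ function on $(0,\infty)$. If $X$ satisfies the Euler–Lagrange equations of the action $S=\int_\Sigma d^d\xi\,F(\gamma_v)$, i.e. $$\frac{\partial F(\gamma_v)}{\partial X^\alpha}-\partial_a\frac{\partial F(\gamma_v)}{\partial(\partial_aX^\alpha)}=0\quad(\alpha=1,\dots,D),$$ then for every $b=1,\dots,d$, $$\left(\partial_b\gamma_v\right)\left(2\gamma_v\,F''(\gamma_v)+F'(\gamma_v)\right)=0\quad\text{on }\Sigma.$$
   Context: A volume metric (of degree $d$) on $M$ is a smooth field of components $V_{[\mu_1\cdots\mu_d][\nu_1\cdots\nu_d]}(X)$ that is totally antisymmetric within each of the two $d$-tuples of indices and symmetric under exchange of the two $d$-tuples. Given $X:\Sigma\to M$, define $\sigma^{\mu_1\cdots\mu_d}=\epsilon^{a_1\cdots a_d}\partial_{a_1}X^{\mu_1}\cdots\partial_{a_d}X^{\mu_d}$ (with $\epsilon$ the $d$-dimensional Levi-Civita symbol) and $\gamma_v=V_{[\mu_1\cdots\mu_d][\nu_1\cdots\nu_d]}(X)\,\sigma^{\mu_1\cdots\mu_d}\sigma^{\nu_1\cdots\nu_d}$. Special cases: for a Riemannian metric $g$, $V=\frac{1}{d!}g_{\mu_1\nu_1}\cdots g_{\mu_d\nu_d}$ gives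 $\gamma_v=\det(g_{\mu\nu}\partial_aX^\mu\partial_bX^\nu)$; for $d=2$ and an areal metric $G_{\mu\nu\rho\lambda}$, $V=\frac14G$ gives $\gamma_v=\frac14G_{\mu\nu\rho\lambda}\sigma^{\mu\nu}\sigma^{\rho\lambda}$. *)

(* Defs.v *)
From HB Require Import structures.
From mathcomp Require Import all_boot all_order all_algebra all_fingroup.
From mathcomp Require Import all_classical all_reals all_analysis.
Set Implicit Arguments. Unset Strict Implicit. Unset Printing Implicit Defensive.
Import Order.TTheory GRing.Theory Num.Theory.
Import numFieldNormedType.Exports.
Local Open Scope classical_set_scope.
Local Open Scope ring_scope.

Section Defs.
Variable R : realType.

Definition ebasis n (i : 'I_n) : 'rV[R]_n := delta_mx 0 i.

Definition partial n (i : 'I_n) (f : 'rV[R]_n -> R) (x : 'rV[R]_n) : R :=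
  derive1 (fun t : R => f (x + t *: ebasis i)) 0.

Fixpoint iterpartial n (s : seq 'I_n) (f : 'rV[R]_n -> R) : 'rV[R]_n -> R :=
  match s with
  | [::] => f
  | i :: s' => partial i (iterpartial s' f)
  end.

Definition smooth_on n (U : set 'rV[R]_n) (f : 'rV[R]_n -> R) : Prop :=
  forall (s : seq 'I_n) (x : 'rV[R]_n), U x -> differentiable (iterpartial s f) x.

Definition C2_pos (F : R -> R) : Prop :=
  forall t : R, 0 < t ->
    [/\ derivable F t 1, derivable (derive1 F) t 1 & {for t, continuous (derive1n 2 F)}].

Definition mindex (d D : nat) := {ffun 'I_d -> 'I_D}.

Definition mperm d D (mu : mindex d D) (s : 'S_d) : mindex d D :=
  [ffun i => mu (s i)].

Definition is_volume_metric d D (M : set 'rV[R]_D)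
    (V : mindex d D -> mindex d D -> 'rV[R]_D -> R) : Prop :=
  [/\ (forall mu nu, smooth_on M (V mu nu)),
      (forall mu nu (s : 'S_d) x, V (mperm mu s) nu x = (-1) ^+ s * V mu nu x),
      (forall mu nu (s : 'S_d) x, V mu (mperm nu s) x = (-1) ^+ s * V mu nu x) &
      (forall mu nu x, V mu nu x = V nu mu x)].

(* sigma^{mu_1..mu_d} = eps^{a_1..a_d} p_{a_1 mu_1} ... p_{a_d mu_d},
   where p_{a mu} stands for d_a X^mu *)
Definition sigma_of d D (p : 'M[R]_(d, D)) (mu : mindex d D) : R :=
  \sum_(s : 'S_d) (-1) ^+ s * \prod_(i < d) p (s i) (mu i).

Definition gamma_of d D (V : mindex d D -> mindex d D -> 'rV[R]_D -> R)
    (x : 'rV[R]_D) (p : 'M[R]_(d, D)) : R :=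
  \sum_(mu : mindex d D) \sum_(nu : mindex d D)
     V mu nu x * sigma_of p mu * sigma_of p nu.

Definition dX d D (X : 'rV[R]_d -> 'rV[R]_D) (xi : 'rV[R]_d) : 'M[R]_(d, D) :=
  \matrix_(a < d, mu < D) partial a (fun eta => X eta 0 mu) xi.

Definition gamma_v d D (V : mindex d D -> mindex d D -> 'rV[R]_D -> R)
    (X : 'rV[R]_d -> 'rV[R]_D) (xi : 'rV[R]_d) : R :=
  gamma_of V (X xi) (dX X xi).

Definition lagr d D (F : R -> R) (V : mindex d D -> mindex d D -> 'rV[R]_D -> R)
    (x : 'rV[R]_D) (p : 'M[R]_(d, D)) : R := F (gamma_of V x p).

Definition dL_dX d D (L : 'rV[R]_D -> 'M[R]_(d, D) -> R) (alpha : 'I_D)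
    (x : 'rV[R]_D) (p : 'M[R]_(d, D)) : R :=
  derive1 (fun t : R => L (x + t *: ebasis alpha) p) 0.

Definition dL_ddX d D (L : 'rV[R]_D -> 'M[R]_(d, D) -> R) (a : 'I_d) (alpha : 'I_D)
    (x : 'rV[R]_D) (p : 'M[R]_(d, D)) : R :=
  derive1 (fun t : R => L x (p + t *: delta_mx a alpha)) 0.

Definition euler_lagrange d D (F : R -> R)
    (V : mindex d D -> mindex d D -> 'rV[R]_D -> R)
    (X : 'rV[R]_d -> 'rV[R]_D) (Sigma : set 'rV[R]_d) : Prop :=
  forall (xi : 'rV[R]_d) (alpha : 'I_D), Sigma xi ->
    dL_dX (lagr F V) alpha (X xi) (dX X xi)
    - \sum_(a < d) partial a (fun eta => dL_ddX (lagr F V) a alpha (X eta) (dX X eta)) xi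
    = 0.

End Defs.

(* Main.v *)
Require Import Defs.
From HB Require Import structures.
From mathcomp Require Import all_boot all_order all_algebra all_fingroup.
From mathcomp Require Import all_classical all_reals all_analysis.
From mathcomp Require Import ring lra.
Import Order.TTheory GRing.Theory Num.Theory.
Import numFieldNormedType.Exports.
Local Open Scope classical_set_scope.
Local Open Scope ring_scope.

Section Line.
Context {R : realType} {V W : normedModType R}.

Lemma line_quotE (f : V -> W) (x v : V) (t0 : R) :
  (fun h : R => h^-1 *: (((fun t : R => f (x + t *: v)) \o shift t0) (h *: 1)
       - f (x + t0 *: v))) =
  (fun h : R => h^-1 *: ((f \o shift (x + t0 *: v)) (h *: v) - f (x + t0 *: v))).
Proof.
apply/funext => h /=; congr (_ *: (f _ - _)).
by rewrite /shift /= [h *: 1]mulr1 scalerDl addrCA addrC.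
Qed.

Lemma line_derivable (f : V -> W) (x v : V) (t0 : R) :
  derivable (fun t : R => f (x + t *: v)) t0 1 <-> derivable f (x + t0 *: v) v.
Proof. by rewrite /derivable line_quotE. Qed.

Lemma line_derive (f : V -> W) (x v : V) (t0 : R) :
  'D_1 (fun t : R => f (x + t *: v)) t0 = 'D_v f (x + t0 *: v).
Proof. by rewrite /derive line_quotE. Qed.

Lemma line_derive0 (f : V -> W) (x v : V) :
  'D_1 (fun t : R => f (x + t *: v)) 0 = 'D_v f x.
Proof. by rewrite line_derive scale0r addr0. Qed.

Lemma line_derivable0 (f : V -> W) (x v : V) :
  derivable (fun t : R => f (x + t *: v)) 0 1 <-> derivable f x v.
Proof. by rewrite line_derivable scale0r addr0. Qed.

End Line.

Lemma partialE (R : realType) n (i : 'I_n) (f : 'rV[R]_n -> R) x :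
  partial i f x = 'D_(ebasis R i) f x.
Proof. by rewrite /partial derive1E line_derive0. Qed.

Section Gen.
Context {R : realType}.

Lemma chain_derive {U V W : normedModType R} (f : U -> W) (u : V -> U) x v :
  derivable u x v -> differentiable f (u x) ->
  derivable (f \o u) x v /\ 'D_v (f \o u) x = 'd f (u x) ('D_v u x).
Proof.
move=> du df.
pose w := fun t : R => u (x + t *: v).
have w0 : w 0 = u x by rewrite /w scale0r addr0.
have dw : differentiable w 0 by apply/derivable1_diffP/line_derivable0.
have dfw : differentiable (f \o w) 0.
  by apply: differentiable_comp => //; rewrite w0.
split.
  apply: (line_derivable0 (f \o u) x v).1.
  by apply/derivable1_diffP; exact dfw.
rewrite -(line_derive0 (f \o u)) -/(f \o w) (deriveE _ dfw) diff_comp //; last by rewrite w0.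
by rewrite /= w0 -(deriveE _ dw) line_derive0.
Qed.

Lemma diff_mx {m n} (f : 'M[R]_(m, n) -> R) y M : differentiable f y ->
  'd f y M = \sum_i \sum_j M i j * 'D_(delta_mx i j) f y.
Proof.
move=> df; rewrite {1}(matrix_sum_delta M) linear_sum; apply: eq_bigr => i _.
rewrite linear_sum; apply: eq_bigr => j _.
by rewrite linearZ (deriveE _ df).
Qed.

Lemma derivable_bigsum {V W : normedModType R} {I : Type} (r : seq I)
   (f : I -> V -> W) x v : (forall i, derivable (f i) x v) ->
  derivable (fun y => \sum_(i <- r) f i y) x v /\
  'D_v (fun y => \sum_(i <- r) f i y) x = \sum_(i <- r) 'D_v (f i) x.
Proof.
move=> df; elim: r => [|a r [IH1 IH2]].
  have -> : (fun y => \sum_(i <- [::]) f i y) = cst 0.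
    by apply/funext => y; rewrite big_nil.
  by rewrite big_nil derive_cst; split => //; exact: derivable_cst.
have -> : (fun y => \sum_(i <- a :: r) f i y) = f a + (fun y => \sum_(i <- r) f i y).
  by apply/funext => y; rewrite big_cons.
split; first exact: derivableD.
by rewrite deriveD // IH2 big_cons.
Qed.

Lemma differentiable_bigsum {V W : normedModType R} {I : Type} (r : seq I)
   (f : I -> V -> W) x : (forall i, differentiable (f i) x) ->
  differentiable (fun y => \sum_(i <- r) f i y) x.
Proof.
move=> df; elim: r => [|a r IH].
  have -> : (fun y => \sum_(i <- [::]) f i y) = cst 0.
    by apply/funext => y; rewrite big_nil.
  exact: differentiable_cst.
have -> : (fun y => \sum_(i <- a :: r) f i y) = f a + (fun y => \sum_(i <- r) f i y).
  by apply/funext => y; rewrite big_cons.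
exact: differentiableD.
Qed.

Lemma differentiableM' {V : normedModType R} (f g : V -> R) x :
  differentiable f x -> differentiable g x -> differentiable (fun z => f z * g z) x.
Proof. exact: differentiableM. Qed.

Lemma differentiable_bigprod {V : normedModType R} {I : Type} (r : seq I)
   (f : I -> V -> R) x : (forall i, differentiable (f i) x) ->
  differentiable (fun y => \prod_(i <- r) f i y) x.
Proof.
move=> df; elim: r => [|a r IH].
  have -> : (fun y => \prod_(i <- [::]) f i y) = cst 1.
    by apply/funext => y; rewrite big_nil.
  exact: differentiable_cst.
have -> : (fun y => \prod_(i <- a :: r) f i y) = (fun y => f a y * \prod_(i <- r) f i y).
  by apply/funext => y; rewrite big_cons.
exact: differentiableM'.
Qed.

Lemma sigma_differentiable {U : normedModType R} {d D} (u : U -> 'M[R]_(d, D)) y mu :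
  (forall i j, differentiable (fun z => u z i j) y) ->
  differentiable (fun z => sigma_of (u z) mu) y.
Proof.
move=> du; rewrite /sigma_of; apply: differentiable_bigsum => s.
apply: differentiableM'; first exact: differentiable_cst.
by apply: differentiable_bigprod => i.
Qed.

End Gen.

Set Implicit Arguments.
Section Alg.
Context {R : realType} {d D : nat}.
Implicit Types (p : 'M[R]_(d, D)) (mu : mindex d D).

Definition Bm p mu : 'M[R]_d := \matrix_(i, j) p i (mu j).
Definition rrep p (a : 'I_d) (v : 'rV[R]_D) : 'M[R]_(d, D) :=
  \matrix_(i, j) if i == a then v 0 j else p i j.
Definition cof p mu a j := cofactor (Bm p mu) a j.
Definition csig (a : 'I_d) (al : 'I_D) p mu := sigma_of (rrep p a (ebasis R al)) mu.

Lemma sigma_det p mu : sigma_of p mu = \det (Bm p mu).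
Proof.
rewrite -det_tr /sigma_of /determinant; apply: eq_bigr => s _; congr (_ * _).
by apply: eq_bigr => i _; rewrite !mxE.
Qed.

Lemma sigma_rrep p a v mu :
  sigma_of (rrep p a v) mu = \sum_j v 0 (mu j) * cof p mu a j.
Proof.
rewrite sigma_det (expand_det_row _ a); apply: eq_bigr => j _.
congr (_ * _); first by rewrite !mxE eqxx.
rewrite /cof /cofactor; congr (_ * \det _); apply/matrixP => k l.
by rewrite !mxE eq_sym (negbTE (neq_lift a k)).
Qed.

Lemma rrep_row p a : rrep p a (row a p) = p.
Proof. by apply/matrixP => i j; rewrite !mxE; case: eqP => [->|]. Qed.

Lemma sigma_expand p a mu : sigma_of p mu = \sum_j p a (mu j) * cof p mu a j.
Proof.
by rewrite -{1}(rrep_row p a) sigma_rrep; apply: eq_bigr => j _; rewrite mxE.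
Qed.

Lemma rrep_same_zero p a b mu : a != b -> sigma_of (rrep p a (row b p)) mu = 0.
Proof.
move=> ab; rewrite sigma_det; apply: (determinant_alternate ab) => j.
by rewrite /Bm !mxE eqxx eq_sym (negbTE ab).
Qed.

Lemma sigma_lin p a al t mu :
  sigma_of (p + t *: delta_mx a al) mu = sigma_of p mu + t * csig a al p mu.
Proof.
have -> : p + t *: delta_mx a al = rrep p a (row a p + t *: ebasis R al).
  apply/matrixP => i j; rewrite !mxE; case: eqP => [->|ia]; first by rewrite eqxx.
  by rewrite /= mulr0 addr0.
rewrite sigma_rrep /csig sigma_rrep (sigma_expand p a) mulr_sumr -big_split /=.
by apply: eq_bigr => j _; rewrite !mxE mulrDl mulrA.
Qed.

Lemma homog_sigma p a b mu :
  \sum_al p b al * csig a al p mu = (a == b)%:R * sigma_of p mu.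
Proof.
rewrite /csig.
under eq_bigr do rewrite sigma_rrep mulr_sumr.
rewrite exchange_big /=.
have -> : \sum_j \sum_al p b al * (ebasis R al 0 (mu j) * cof p mu a j)
        = sigma_of (rrep p a (row b p)) mu.
  rewrite sigma_rrep; apply: eq_bigr => j _.
  rewrite (bigD1 (mu j)) //= big1 ?addr0; first by rewrite /ebasis !mxE !eqxx mul1r.
  by move=> al /negbTE nal; rewrite /ebasis !mxE eqxx /= eq_sym nal mul0r mulr0.
case: eqP => [<-|/eqP ab]; first by rewrite rrep_row mul1r.
by rewrite rrep_same_zero // mul0r.
Qed.

Variable V : mindex d D -> mindex d D -> 'rV[R]_D -> R.

Definition Hc a al x p := \sum_mu \sum_nu V mu nu x *
   (csig a al p mu * sigma_of p nu + sigma_of p mu * csig a al p nu).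
Definition Kc a al x p := \sum_mu \sum_nu V mu nu x *
   (csig a al p mu * csig a al p nu).

Lemma homog_H x p a b :
  \sum_al p b al * Hc a al x p = 2 * (a == b)%:R * gamma_of V x p.
Proof.
rewrite /Hc /gamma_of.
under eq_bigr do rewrite mulr_sumr.
rewrite exchange_big mulr_sumr; apply: eq_bigr => mu _.
under eq_bigr do rewrite mulr_sumr.
rewrite exchange_big mulr_sumr; apply: eq_bigr => nu _ /=.
have e : forall al, p b al * (V mu nu x * (csig a al p mu * sigma_of p nu
     + sigma_of p mu * csig a al p nu)) =
   V mu nu x * (sigma_of p nu * (p b al * csig a al p mu)
     + sigma_of p mu * (p b al * csig a al p nu)).
  by move=> al; ring.
under eq_bigr do rewrite e.
rewrite -mulr_sumr big_split /= -!mulr_sumr !homog_sigma.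
by ring.
Qed.

Lemma gamma_lin x p a al t :
  gamma_of V x (p + t *: delta_mx a al) =
  gamma_of V x p + t * Hc a al x p + t ^+ 2 * Kc a al x p.
Proof.
rewrite /gamma_of /Hc /Kc !mulr_sumr -!big_split; apply: eq_bigr => mu _ /=.
rewrite !mulr_sumr -!big_split; apply: eq_bigr => nu _ /=.
rewrite !sigma_lin; ring.
Qed.

End Alg.

Set Implicit Arguments.
Section Schwarz.
Context {R : realType}.

Lemma diff_eps {V : normedModType R} (f : V -> R) x : differentiable f x ->
  forall eps, 0 < eps -> exists2 del, 0 < del &
    forall w, `|w| < del -> `|f (x + w) - f x - 'd f x w| <= eps * `|w|.
Proof.
move=> df eps e0.
have := diff_locally df; move/eqaddoP => /(_ eps e0) /nbhs_norm0P [del del0 H].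
exists del => // w /H /=.
have -> : (f \o +%R^~ x - (cst (f x) + 'd f x)) w = f (x + w) - f x - 'd f x w.
  have -> : (f \o +%R^~ x - (cst (f x) + 'd f x)) w = f (w + x) - (f x + 'd f x w) by [].
  by rewrite (addrC w x) opprD addrA.
by [].
Qed.

Lemma derivableB' {V W : normedModType R} (f g : V -> W) x v :
  derivable f x v -> derivable g x v -> derivable (fun y => f y - g y) x v.
Proof. exact: derivableB. Qed.

Lemma deriveB' {V W : normedModType R} (f g : V -> W) x v :
  derivable f x v -> derivable g x v ->
  'D_v (fun y => f y - g y) x = 'D_v f x - 'D_v g x.
Proof. exact: deriveB. Qed.

Definition Dlt n (f : 'rV[R]_n -> R) x i j h :=
  f (x + h *: ebasis R i + h *: ebasis R j) - f (x + h *: ebasis R i)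
  - f (x + h *: ebasis R j) + f x.

Lemma open_ball n (S : set 'rV[R]_n) x : open S -> S x ->
  exists2 d0, 0 < d0 & forall w, `|w| < d0 -> S (x + w).
Proof.
move=> oS Sx.
have : nbhs x S by apply: open_nbhs_nbhs; split.
move/nbhs_normP => [d0 d00 H]; exists d0 => // w wd; apply: H.
by rewrite /ball_ /= opprD addrA subrr sub0r normrN.
Qed.

Lemma young_half n (f : 'rV[R]_n -> R) (S : set 'rV_n) x i j :
  open S -> S x -> (forall y, S y -> differentiable f y) ->
  differentiable (partial i f) x ->
  forall eps, 0 < eps -> exists2 del, 0 < del & forall h, 0 < h -> h < del ->
    `|Dlt f x i j h - h ^+ 2 * partial j (partial i f) x| <= eps * h ^+ 2.
Proof.
move=> oS Sx dfS dgi eps e0.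
set ei := ebasis R i; set ej := ebasis R j; set gi := partial i f.
set A := `|ei| + `|ej|.
have A0 : 0 <= A by rewrite addr_ge0.
have C0 : 0 < A + 1 by rewrite ltr_wpDl.
have [d0 d00 HS] := @open_ball _ S x oS Sx.
set e' := eps / (2 * (A + 1)).
have e1 : 0 < e' by rewrite divr_gt0 // mulr_gt0.
have E : e' * (2 * (A + 1)) = eps by rewrite divfK // gt_eqF // mulr_gt0.
have [d1 d10 Hd] := @diff_eps _ gi x dgi _ e1.
set m := Num.min d0 d1.
have m0 : 0 < m by rewrite lt_min d00 d10.
exists (m / (A + 1)); first by rewrite divr_gt0.
move=> h h0 hd.
have hm : h * (A + 1) < m by rewrite -ltr_pdivlMr.
have hA : h * A < m by nra.
have Nb : forall s t, 0 <= s -> s <= h -> 0 <= t -> t <= h ->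
    `|s *: ei + t *: ej| <= h * A.
  move=> s t s0 sh t0 th; rewrite (le_trans (ler_normD _ _)) // !normrZ !ger0_norm //.
  by rewrite mulrDr lerD // ler_wpM2r.
have Nm : forall s t, 0 <= s -> s <= h -> 0 <= t -> t <= h ->
    `|s *: ei + t *: ej| < m.
  by move=> s t s0 sh t0 th; apply: le_lt_trans (Nb s t s0 sh t0 th) hA.
have md0 : m <= d0 by rewrite ge_min lexx.
have md1 : m <= d1 by rewrite ge_min lexx orbT.
have h0' : 0 <= h by apply: ltW.
have S1 : forall s, 0 <= s -> s <= h -> S (x + h *: ej + s *: ei).
  move=> s s0 sh.
  have -> : x + h *: ej + s *: ei = x + (s *: ei + h *: ej) by rewrite -addrA (addrC (h *: ej)).
  by apply: HS; apply: lt_le_trans (Nm s h s0 sh h0' (lexx h)) md0.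
have S2 : forall s, 0 <= s -> s <= h -> S (x + s *: ei).
  move=> s s0 sh.
  have -> : x + s *: ei = x + (s *: ei + 0 *: ej) by rewrite scale0r addr0.
  by apply: HS; apply: lt_le_trans (Nm s 0 s0 sh (lexx 0) h0') md0.
pose F1 := fun s : R => f (x + h *: ej + s *: ei).
pose F2 := fun s : R => f (x + s *: ei).
pose phi := fun s => F1 s - F2 s.
have dF1 : forall s, 0 <= s -> s <= h ->
    derivable F1 s 1 /\ 'D_1 F1 s = gi (x + h *: ej + s *: ei).
  move=> s s0 sh; split.
    apply: (line_derivable f (x + h *: ej) ei s).2.
    by apply: diff_derivable; apply: dfS; apply: S1.
  by rewrite /F1 line_derive /gi partialE.
have dF2 : forall s, 0 <= s -> s <= h ->
    derivable F2 s 1 /\ 'D_1 F2 s = gi (x + s *: ei).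
  move=> s s0 sh; split.
    apply: (line_derivable f x ei s).2.
    by apply: diff_derivable; apply: dfS; apply: S2.
  by rewrite /F2 line_derive /gi partialE.
have dphi : forall s, 0 <= s -> s <= h -> derivable phi s 1 /\
    'D_1 phi s = gi (x + h *: ej + s *: ei) - gi (x + s *: ei).
  move=> s s0 sh; have [a1 b1] := dF1 s s0 sh; have [a2 b2] := dF2 s s0 sh.
  by split; [exact: derivableB' | rewrite /phi deriveB' // b1 b2].
have [c cI Ec] : exists2 c, c \in `]0, h[ & phi h - phi 0 = 'D_1 phi c * (h - 0).
  apply: MVT => //.
  - move=> s; rewrite in_itv /= => /andP [s0 sh]; apply: derivableP.
    exact: (dphi s (ltW s0) (ltW sh)).1.
  - apply: continuous_in_subspaceT => s /set_mem /=; rewrite in_itv /= => /andP [s0 sh].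
    apply: differentiable_continuous; apply/derivable1_diffP; exact: (dphi s s0 sh).1.
move: cI; rewrite in_itv /= => /andP [c0 ch].
have Edlt : Dlt f x i j h = phi h - phi 0.
  rewrite /Dlt /phi /F1 /F2 !scale0r !addr0 -/ei -/ej (addrAC x (h *: ej) (h *: ei)).
  by ring.
set L := partial j gi x.
have dL : 'd gi x ej = L by rewrite /L partialE (deriveE _ dgi).
set w1 := c *: ei + h *: ej.
set w2 := c *: ei + 0 *: ej.
have Nw1 : `|w1| <= h * A by exact: Nb (ltW c0) (ltW ch) h0' (lexx h).
have Nw2 : `|w2| <= h * A by exact: Nb (ltW c0) (ltW ch) (lexx 0) h0'.
have r1 := Hd w1 (lt_le_trans (Nm c h (ltW c0) (ltW ch) h0' (lexx h)) md1).
have r2 := Hd w2 (lt_le_trans (Nm c 0 (ltW c0) (ltW ch) (lexx 0) h0') md1).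
set a1 := gi (x + w1) - gi x - 'd gi x w1 in r1.
set a2 := gi (x + w2) - gi x - 'd gi x w2 in r2.
have Dc : 'D_1 phi c = gi (x + w1) - gi (x + w2).
  rewrite (dphi c (ltW c0) (ltW ch)).2 /w1 /w2 scale0r addr0.
  by rewrite -addrA (addrC (h *: ej)).
have lin1 : 'd gi x w1 = 'd gi x (c *: ei) + h * L.
  by rewrite /w1 linearD !linearZZ dL.
have lin2 : 'd gi x w2 = 'd gi x (c *: ei) by rewrite /w2 scale0r addr0.
have key : Dlt f x i j h - h ^+ 2 * L = (a1 - a2) * h.
  by rewrite Edlt Ec subr0 Dc /a1 /a2 lin1 lin2; ring.
rewrite key normrM (ger0_norm h0').
have B1 : e' * `|w1| <= e' * (h * A) by rewrite ler_wpM2l // ltW.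
have B2 : e' * `|w2| <= e' * (h * A) by rewrite ler_wpM2l // ltW.
have B : `|a1 - a2| <= 2 * e' * (h * A).
  rewrite (le_trans (ler_normB _ _)) //.
  apply: (le_trans (lerD r1 r2)); lra.
have EA : 2 * e' * A <= eps by nra.
apply: (le_trans (ler_wpM2r h0' B)).
have -> : 2 * e' * (h * A) * h = (2 * e' * A) * h ^+ 2 by ring.
by rewrite ler_wpM2r // sqr_ge0.
Qed.

Lemma Dlt_sym n (f : 'rV[R]_n -> R) x i j h : Dlt f x j i h = Dlt f x i j h.
Proof. by rewrite /Dlt (addrAC x (h *: ebasis R j)); ring. Qed.

Lemma schwarz n (f : 'rV[R]_n -> R) (S : set 'rV_n) x i j :
  open S -> S x -> (forall y, S y -> differentiable f y) ->
  differentiable (partial i f) x -> differentiable (partial j f) x ->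
  partial j (partial i f) x = partial i (partial j f) x.
Proof.
move=> oS Sx dfS di dj.
set Li := partial j (partial i f) x; set Lj := partial i (partial j f) x.
have H : forall eps, 0 < eps -> `|Li - Lj| <= 2 * eps.
  move=> eps e0.
  have [di0 di00 Hi] := @young_half n f S x i j oS Sx dfS di eps e0.
  have [dj0 dj00 Hj] := @young_half n f S x j i oS Sx dfS dj eps e0.
  set h := Num.min di0 dj0 / 2.
  have m0 : 0 < Num.min di0 dj0 by rewrite lt_min di00 dj00.
  have h0 : 0 < h by rewrite divr_gt0.
  have hm : h < Num.min di0 dj0 by rewrite /h ltr_pdivrMr // ltr_pMr // ltr1n.
  have hi : h < di0 by apply: lt_le_trans hm _; rewrite ge_min lexx.
  have hj : h < dj0 by apply: lt_le_trans hm _; rewrite ge_min lexx orbT.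
  have A1 := Hi h h0 hi; have A2 := Hj h h0 hj.
  rewrite Dlt_sym in A2.
  have h2 : 0 < h ^+ 2 by rewrite exprn_gt0.
  have : h ^+ 2 * `|Li - Lj| <= h ^+ 2 * (2 * eps).
    rewrite -(ger0_norm (ltW h2)) -normrM.
    have -> : `|h ^+ 2| * (2 * eps) = eps * h ^+ 2 + eps * h ^+ 2.
      rewrite ger0_norm ?(ltW h2) //. move: (h ^+ 2) => u. ring.
    have E : forall D a b c : R, c * (a - b) = (D - c * b) - (D - c * a).
      by move=> D a b c; ring.
    rewrite (E (Dlt f x i j h)).
    apply: (le_trans (ler_normB _ _)).
    exact: lerD A2 A1.
  by rewrite ler_pM2l.
apply/eqP; rewrite -subr_eq0; apply/negPn/negP => nz.
have z0 : 0 < `|Li - Lj| by rewrite normr_gt0.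
have := H (`|Li - Lj| / 4) (divr_gt0 z0 (ltr0n _ 4)).
lra.
Qed.
End Schwarz.

Set Implicit Arguments.
Section S.
Context {R : realType}.
Section L.
Context {V : normedModType R}.
Implicit Types f g : V -> R.

Lemma derivableD' f g x v :
  derivable f x v -> derivable g x v -> derivable (fun y => f y + g y) x v.
Proof. exact: derivableD. Qed.
Lemma deriveD' f g x v : derivable f x v -> derivable g x v ->
  'D_v (fun y => f y + g y) x = 'D_v f x + 'D_v g x.
Proof. exact: deriveD. Qed.
Lemma derivableM' f g x v :
  derivable f x v -> derivable g x v -> derivable (fun y => f y * g y) x v.
Proof. exact: derivableM. Qed.
Lemma deriveM' f g x v : derivable f x v -> derivable g x v ->
  'D_v (fun y => f y * g y) x = f x * 'D_v g x + g x * 'D_v f x.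
Proof. move=> df dg; have := deriveM df dg; exact. Qed.
Lemma derivable_cst' (a : R) x v : derivable (fun _ : V => a) x v.
Proof. exact: derivable_cst. Qed.
Lemma derive_cst' (a : R) x v : 'D_v (fun _ : V => a) x = 0.
Proof. exact: derive_cst. Qed.
End L.

Lemma derivable_t (x : R) : derivable (fun t : R => t) x 1.
Proof. exact: derivable_id. Qed.
Lemma derive_t (x : R) : 'D_1 (fun t : R => t) x = 1.
Proof. exact: derive_id. Qed.

Lemma quad_derive (A B C : R) :
  derivable (fun t : R => A + t * B + t ^+ 2 * C) 0 1 /\
  'D_1 (fun t : R => A + t * B + t ^+ 2 * C) 0 = B.
Proof.
pose p : {poly R} := A%:P + B *: 'X + C *: 'X^2.
have E : (fun t : R => A + t * B + t ^+ 2 * C) = horner p.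
  by apply/funext => t; rewrite /p !hornerD hornerC !hornerZ hornerX hornerXn; ring.
rewrite E; split; first exact: derivable_horner.
rewrite -derive1E -derivE /p !poly.derivE.
rewrite !hornerD hornerC !hornerZ hornerD !hornerM hornerX -polyC1 !hornerC.
by rewrite mulr0 mul0r addr0 mulr0 addr0 mulr1 add0r.
Qed.

Lemma lin_derive (A B : R) :
  derivable (fun t : R => A + t * B) 0 1 /\ 'D_1 (fun t : R => A + t * B) 0 = B.
Proof.
have E : (fun t : R => A + t * B) = (fun t : R => A + t * B + t ^+ 2 * 0).
  by apply/funext => t; rewrite mulr0 addr0.
by rewrite E; exact: quad_derive.
Qed.

Section G.
Context {W : normedModType R}.
Lemma derive3 (f g h : W -> R) x v :
  derivable f x v -> derivable g x v -> derivable h x v ->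
  derivable (fun y => f y * g y * h y) x v /\
  'D_v (fun y => f y * g y * h y) x =
    'D_v f x * g x * h x + f x * 'D_v g x * h x + f x * g x * 'D_v h x.
Proof.
move=> df dg dh.
have dfg := @derivableM' W f g x v df dg.
split; first exact: (@derivableM' W (fun y => f y * g y) h x v dfg dh).
rewrite (@deriveM' W (fun y => f y * g y) h x v dfg dh).
rewrite (@deriveM' W f g x v df dg); ring.
Qed.
End G.

Context {d D : nat}.
Implicit Types (p : 'M[R]_(d, D)) (mu : mindex d D).

Lemma sigma_diff_id mu p : differentiable (fun q : 'M[R]_(d, D) => sigma_of q mu) p.
Proof.
apply: (@sigma_differentiable R _ d D id p mu) => i j.
exact: differentiable_coord.
Qed.

Lemma csig_diff a al mu p :
  differentiable (fun q : 'M[R]_(d, D) => csig a al q mu) p.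
Proof.
apply: (@sigma_differentiable R _ d D (fun q => rrep q a (ebasis R al)) p mu) => i j.
have -> : (fun z : 'M[R]_(d, D) => rrep z a (ebasis R al) i j) =
          (fun z => if i == a then ebasis R al 0 j else z i j).
  by apply/funext => z; rewrite mxE.
case: (i == a); first exact: differentiable_cst.
exact: differentiable_coord.
Qed.

Lemma D_sigma a al p mu :
  'D_(delta_mx a al) (fun q : 'M[R]_(d, D) => sigma_of q mu) p = csig a al p mu.
Proof.
rewrite -(line_derive0 (fun q : 'M[R]_(d, D) => sigma_of q mu) p (delta_mx a al)).
have -> : (fun t : R => sigma_of (p + t *: delta_mx a al) mu) =
          (fun t => sigma_of p mu + t * csig a al p mu).
  by apply/funext => t; rewrite sigma_lin.
exact: (lin_derive _ _).2.
Qed.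

Lemma chain_sigma (u : 'rV[R]_d -> 'M[R]_(d, D)) eta v mu :
  derivable u eta v ->
  derivable (fun e => sigma_of (u e) mu) eta v /\
  'D_v (fun e => sigma_of (u e) mu) eta =
    \sum_c \sum_al 'D_v u eta c al * csig c al (u eta) mu.
Proof.
move=> du.
have [h1 h2] := chain_derive _ _ _ _ du (sigma_diff_id mu (u eta)).
split; first exact: h1.
have -> : 'D_v (fun e => sigma_of (u e) mu) eta =
          'D_v ((fun q => sigma_of q mu) \o u) eta by [].
rewrite h2 diff_mx; last exact: sigma_diff_id.
by apply: eq_bigr => c _; apply: eq_bigr => al _; rewrite D_sigma.
Qed.

Lemma chain_csig (u : 'rV[R]_d -> 'M[R]_(d, D)) eta v a al mu :
  derivable u eta v ->
  derivable (fun e => csig a al (u e) mu) eta v.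
Proof.
move=> du; have [h1 _] := chain_derive _ _ _ _ du (csig_diff a al mu (u eta)).
exact: h1.
Qed.

Lemma chain_V (u : 'rV[R]_d -> 'rV[R]_D) (f : 'rV[R]_D -> R) eta v :
  derivable u eta v -> differentiable f (u eta) ->
  derivable (fun e => f (u e)) eta v /\
  'D_v (fun e => f (u e)) eta =
    \sum_al 'D_v u eta 0 al * 'D_(ebasis R al) f (u eta).
Proof.
move=> du df.
have [h1 h2] := chain_derive _ _ _ _ du df.
split; first exact: h1.
have -> : 'D_v (fun e => f (u e)) eta = 'D_v (f \o u) eta by [].
rewrite h2 diff_mx // big_ord1.
by apply: eq_bigr => al _.
Qed.

Lemma D_gamma_p (V : mindex d D -> mindex d D -> 'rV[R]_D -> R) x p a al :
  derivable (fun t : R => gamma_of V x (p + t *: delta_mx a al)) 0 1 /\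
  'D_1 (fun t : R => gamma_of V x (p + t *: delta_mx a al)) 0 = Hc V a al x p.
Proof.
have -> : (fun t : R => gamma_of V x (p + t *: delta_mx a al)) =
  (fun t => gamma_of V x p + t * Hc V a al x p + t ^+ 2 * Kc V a al x p).
  by apply/funext => t; rewrite gamma_lin.
exact: quad_derive.
Qed.

End S.

Set Implicit Arguments.

Section M.
Context {R : realType} {d D : nat}.
Variable V : mindex d D -> mindex d D -> 'rV[R]_D -> R.

Lemma D_sum (W : normedModType R) (T : finType) (f : T -> W -> R) x v :
  (forall i, derivable (f i) x v) ->
  derivable (fun y => \sum_i f i y) x v /\
  'D_v (fun y => \sum_i f i y) x = \sum_i 'D_v (f i) x.
Proof. by move=> H; have := derivable_bigsum (index_enum T) f x v H. Qed.

Arguments D_sum {W T} f x v _.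
Lemma D_sum2 (W : normedModType R) (f : mindex d D -> mindex d D -> W -> R) x v :
  (forall mu nu, derivable (f mu nu) x v) ->
  derivable (fun y => \sum_mu \sum_nu f mu nu y) x v /\
  'D_v (fun y => \sum_mu \sum_nu f mu nu y) x = \sum_mu \sum_nu 'D_v (f mu nu) x.
Proof.
move=> H.
have inner := fun mu => D_sum (f mu) x v (H mu).
have [h1 h2] := D_sum (fun mu y => \sum_nu f mu nu y) x v (fun mu => (inner mu).1).
split; first exact: h1.
by rewrite h2; apply: eq_bigr => mu _; rewrite (inner mu).2.
Qed.

Arguments D_sum2 {W} f x v _.
Definition Gx al x (p : 'M[R]_(d, D)) := \sum_mu \sum_nu
  'D_(ebasis R al) (V mu nu) x * sigma_of p mu * sigma_of p nu.

Lemma DGx x (p : 'M[R]_(d, D)) v : (forall mu nu, derivable (V mu nu) x v) ->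
  derivable (fun y => gamma_of V y p) x v /\
  'D_v (fun y => gamma_of V y p) x =
    \sum_mu \sum_nu 'D_v (V mu nu) x * sigma_of p mu * sigma_of p nu.
Proof.
move=> dV.
have T := fun mu nu => derive3 (dV mu nu) (@derivable_cst' _ _ (sigma_of p mu) x v)
                            (@derivable_cst' _ _ (sigma_of p nu) x v).
have [h1 h2] := D_sum2 (fun mu nu y => V mu nu y * sigma_of p mu * sigma_of p nu) x v
   (fun mu nu => (T mu nu).1).
split; first exact: h1.
rewrite h2; apply: eq_bigr => mu _; apply: eq_bigr => nu _.
by rewrite (T mu nu).2 !derive_cst' !mulr0 mul0r !addr0.
Qed.


Lemma sum2_scal (I J : finType) (f : I -> J -> R) a b :
  a * (\sum_i \sum_j f i j) * b = \sum_i \sum_j a * f i j * b.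
Proof.
rewrite mulr_sumr mulr_suml; apply: eq_bigr => i _.
by rewrite mulr_sumr mulr_suml; apply: eq_bigr => j _.
Qed.

Lemma sum2_scal' (I J : finType) (f : I -> J -> R) a :
  a * (\sum_i \sum_j f i j) = \sum_i \sum_j a * f i j.
Proof. by rewrite mulr_sumr; apply: eq_bigr => i _; rewrite mulr_sumr. Qed.

Lemma exch3 (I J K : finType) (f : I -> J -> K -> R) :
  \sum_i \sum_j \sum_k f i j k = \sum_j \sum_k \sum_i f i j k.
Proof.
rewrite exchange_big; apply: eq_bigr => j _.
by rewrite exchange_big.
Qed.

Lemma exch4 (I J K L : finType) (f : I -> J -> K -> L -> R) :
  \sum_i \sum_j \sum_k \sum_l f i j k l = \sum_k \sum_l \sum_i \sum_j f i j k l.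
Proof.
under eq_bigr do rewrite exchange_big.
under eq_bigr do under eq_bigr do rewrite exchange_big.
rewrite exchange_big; apply: eq_bigr => k _.
by rewrite exchange_big.
Qed.

Lemma Dg_formula (u : 'rV[R]_d -> 'rV[R]_D) (q : 'rV[R]_d -> 'M[R]_(d, D)) eta v :
  derivable u eta v -> derivable q eta v ->
  (forall mu nu, differentiable (V mu nu) (u eta)) ->
  derivable (fun e => gamma_of V (u e) (q e)) eta v /\
  'D_v (fun e => gamma_of V (u e) (q e)) eta =
   \sum_al 'D_v u eta 0 al * Gx al (u eta) (q eta) +
   \sum_c \sum_al 'D_v q eta c al * Hc V c al (u eta) (q eta).
Proof.
move=> du dq dV.
have CV := fun mu nu => chain_V du (dV mu nu).
have CS := fun mu => chain_sigma mu dq.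
have T := fun mu nu => derive3 (CV mu nu).1 (CS mu).1 (CS nu).1.
have [h1 h2] := D_sum2 (fun mu nu e => V mu nu (u e) * sigma_of (q e) mu * sigma_of (q e) nu)
   eta v (fun mu nu => (T mu nu).1).
split; first exact: h1.
rewrite h2.
under eq_bigr => mu _ do under eq_bigr => nu _ do rewrite (T mu nu).2 (CV mu nu).2 !(CS _).2.
rewrite /Gx /Hc.
have E1 : \sum_al 'D_v u eta 0 al * (\sum_mu \sum_nu
      'D_(ebasis R al) (V mu nu) (u eta) * sigma_of (q eta) mu * sigma_of (q eta) nu)
  = \sum_mu \sum_nu (\sum_al 'D_v u eta 0 al * 'D_(ebasis R al) (V mu nu) (u eta))
       * sigma_of (q eta) mu * sigma_of (q eta) nu.
  under eq_bigr do rewrite mulr_sumr.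
  under eq_bigr do under eq_bigr do rewrite mulr_sumr.
  rewrite exch3; apply: eq_bigr => mu _; apply: eq_bigr => nu _.
  by rewrite !mulr_suml; apply: eq_bigr => al _; ring.
have E2 : \sum_c \sum_al 'D_v q eta c al * (\sum_mu \sum_nu V mu nu (u eta) *
      (csig c al (q eta) mu * sigma_of (q eta) nu +
       sigma_of (q eta) mu * csig c al (q eta) nu))
  = \sum_mu \sum_nu (V mu nu (u eta) *
      (\sum_c \sum_al 'D_v q eta c al * csig c al (q eta) mu) * sigma_of (q eta) nu
    + V mu nu (u eta) * sigma_of (q eta) mu *
      (\sum_c \sum_al 'D_v q eta c al * csig c al (q eta) nu)).
  under eq_bigr do under eq_bigr do rewrite mulr_sumr.
  under eq_bigr do under eq_bigr do under eq_bigr do rewrite mulr_sumr.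
  rewrite exch4; apply: eq_bigr => mu _; apply: eq_bigr => nu _.
  rewrite sum2_scal sum2_scal' -big_split; apply: eq_bigr => c _.
  by rewrite -big_split; apply: eq_bigr => al _ /=; ring.
rewrite E1 E2 -big_split; apply: eq_bigr => mu _.
by rewrite -big_split; apply: eq_bigr => nu _ /=; rewrite addrA.
Qed.

End M.

Set Implicit Arguments.

Section F.
Context {R : realType}.

Lemma sum_delta n (b : 'I_n) (f : 'I_n -> R) : \sum_a (a == b)%:R * f a = f b.
Proof.
rewrite (bigD1 b) //= eqxx mul1r big1 ?addr0 // => a /negbTE ->.
by rewrite mul0r.
Qed.

Lemma final_alg (n m : nat) (b : 'I_n) (w Gx : 'I_m -> R) (DH H0 : 'I_n -> 'I_m -> R)
  (DP : 'I_n -> 'I_n -> 'I_m -> R) (Dga : 'I_n -> R) (F1 F2v gx : R) :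
  (forall al, F1 * Gx al - \sum_a (F1 * DH a al + H0 a al * (Dga a * F2v)) = 0) ->
  (forall a, \sum_al (w al * DH a al + H0 a al * DP a b al) = 2 * (a == b)%:R * Dga a) ->
  (forall a, \sum_al w al * H0 a al = 2 * (a == b)%:R * gx) ->
  Dga b = \sum_al w al * Gx al + \sum_c \sum_al DP b c al * H0 c al ->
  (forall c al, DP b c al = DP c b al) ->
  Dga b * (2 * gx * F2v + F1) = 0.
Proof.
move=> EL Hom Hom0 Ch Sch.
have Z : \sum_al w al * (F1 * Gx al - \sum_a (F1 * DH a al + H0 a al * (Dga a * F2v))) = 0.
  by apply: big1 => al _; rewrite EL mulr0.
have Z2 : \sum_al w al * (\sum_a (F1 * DH a al + H0 a al * (Dga a * F2v)))
   = \sum_a (F1 * (\sum_al w al * DH a al) + F2v * Dga a * (\sum_al w al * H0 a al)).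
  under eq_bigr do rewrite mulr_sumr.
  rewrite exchange_big; apply: eq_bigr => a _.
  rewrite !mulr_sumr -big_split; apply: eq_bigr => al _ /=; ring.
have Hom' : forall a, \sum_al w al * DH a al =
     2 * (a == b)%:R * Dga a - \sum_al H0 a al * DP a b al.
  by move=> a; rewrite -(Hom a) big_split /= addrK.
have Z3 : forall a, F1 * (\sum_al w al * DH a al) + F2v * Dga a * (\sum_al w al * H0 a al)
   = (a == b)%:R * (2 * F1 * Dga a + 2 * F2v * Dga a * gx)
     - F1 * \sum_al H0 a al * DP a b al.
  by move=> a; rewrite Hom' Hom0; ring.
have Z' : \sum_al (w al * (F1 * Gx al) -
     w al * (\sum_a (F1 * DH a al + H0 a al * (Dga a * F2v)))) = 0.
  by rewrite -[RHS]Z; apply: eq_bigr => al _; rewrite mulrBr.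
rewrite sumrB Z2 in Z'.
have Z4 : \sum_a (F1 * (\sum_al w al * DH a al) + F2v * Dga a * (\sum_al w al * H0 a al))
   = \sum_a ((a == b)%:R * (2 * F1 * Dga a + 2 * F2v * Dga a * gx)
     - F1 * \sum_al H0 a al * DP a b al).
  by apply: eq_bigr => a _; exact: Z3.
rewrite Z4 sumrB sum_delta -mulr_sumr in Z'.
clear Z; rename Z' into Z.
have T : \sum_a \sum_al H0 a al * DP a b al = \sum_c \sum_al DP b c al * H0 c al.
  by apply: eq_bigr => c _; apply: eq_bigr => al _; rewrite Sch mulrC.
rewrite T in Z.
have S1 : \sum_al w al * (F1 * Gx al) = F1 * \sum_al w al * Gx al.
  by rewrite mulr_sumr; apply: eq_bigr => al _; ring.
rewrite S1 in Z.
have E : \sum_c \sum_al DP b c al * H0 c al = Dga b - \sum_al w al * Gx al.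
  by rewrite Ch addrC addKr.
rewrite E in Z.
apply/eqP; rewrite -oppr_eq0; apply/eqP; rewrite -[RHS]Z; ring.
Qed.
End F.

Set Implicit Arguments.

Section Main.
Context {R : realType} {d D : nat}.
Variable V : mindex d D -> mindex d D -> 'rV[R]_D -> R.
Variable F : R -> R.

Lemma Hh_derivable (u : 'rV[R]_d -> 'rV[R]_D) (q : 'rV[R]_d -> 'M[R]_(d, D)) eta v a al :
  derivable u eta v -> derivable q eta v ->
  (forall mu nu, differentiable (V mu nu) (u eta)) ->
  derivable (fun e => Hc V a al (u e) (q e)) eta v.
Proof.
move=> du dq dV.
have T : forall mu nu, derivable (fun e => V mu nu (u e) *
    (csig a al (q e) mu * sigma_of (q e) nu + sigma_of (q e) mu * csig a al (q e) nu)) eta v.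
  move=> mu nu.
  apply: (@derivableM' _ _ (fun e => V mu nu (u e)) (fun e =>
    csig a al (q e) mu * sigma_of (q e) nu + sigma_of (q e) mu * csig a al (q e) nu)).
    exact: (chain_V du (dV mu nu)).1.
  apply: (@derivableD' _ _ (fun e => csig a al (q e) mu * sigma_of (q e) nu)
                           (fun e => sigma_of (q e) mu * csig a al (q e) nu)).
    apply: (@derivableM' _ _ (fun e => csig a al (q e) mu) (fun e => sigma_of (q e) nu)).
      exact: chain_csig.
    exact: (chain_sigma nu dq).1.
  apply: (@derivableM' _ _ (fun e => sigma_of (q e) mu) (fun e => csig a al (q e) nu)).
    exact: (chain_sigma mu dq).1.
  exact: chain_csig.
rewrite /Hc.
exact: (D_sum2 (fun mu nu e => V mu nu (u e) *
    (csig a al (q e) mu * sigma_of (q e) nu + sigma_of (q e) mu * csig a al (q e) nu)) T).1.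
Qed.

Lemma dL_ddX_E x p a al : derivable F (gamma_of V x p) 1 ->
  dL_ddX (lagr F V) a al x p = derive1 F (gamma_of V x p) * Hc V a al x p.
Proof.
move=> dF; rewrite /dL_ddX /lagr.
have [dk Dk] := D_gamma_p V x p a al.
set k := (fun t : R => gamma_of V x (p + t *: delta_mx a al)) in dk Dk.
have k0 : k 0 = gamma_of V x p by rewrite /k scale0r addr0.
have dF' : derivable F (k 0) 1 by rewrite k0.
change (derive1 (F \o k) 0 = derive1 F (gamma_of V x p) * Hc V a al x p).
by rewrite (derive1_comp dk dF') k0 (derive1E k) Dk.
Qed.

Lemma dL_dX_E x p al : (forall mu nu, differentiable (V mu nu) x) ->
  derivable F (gamma_of V x p) 1 ->
  dL_dX (lagr F V) al x p = derive1 F (gamma_of V x p) * Gx V al x p.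
Proof.
move=> dV dF; rewrite /dL_dX /lagr.
have [dG DG] := DGx V p (fun mu nu => @diff_derivable _ _ _ (V mu nu) x (ebasis R al) (dV mu nu)).
set k := fun t : R => gamma_of V (x + t *: ebasis R al) p.
have dk : derivable k 0 1 := (line_derivable0 (fun y => gamma_of V y p) x (ebasis R al)).2 dG.
have k0 : k 0 = gamma_of V x p by rewrite /k scale0r addr0.
have dF' : derivable F (k 0) 1 by rewrite k0.
change (derive1 (F \o k) 0 = derive1 F (gamma_of V x p) * Gx V al x p).
rewrite (derive1_comp dk dF') k0 (derive1E k) /k (line_derive0 (fun y => gamma_of V y p) x (ebasis R al)).
by rewrite DG.
Qed.

End Main.

Unset Implicit Arguments.

Theorem mainTheorem3 (R : realType) (d D : nat)
  (Sigma : set 'rV[R]_d) (M : set 'rV[R]_D)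
  (V : mindex d D -> mindex d D -> 'rV[R]_D -> R)
  (X : 'rV[R]_d -> 'rV[R]_D) (F : R -> R) :
  open Sigma -> open M ->
  is_volume_metric M V ->
  (forall xi, Sigma xi -> M (X xi)) ->
  (forall mu : 'I_D, smooth_on Sigma (fun xi => X xi 0 mu)) ->
  (forall xi, Sigma xi -> 0 < gamma_v V X xi) ->
  C2_pos F ->
  euler_lagrange F V X Sigma ->
  forall (xi : 'rV[R]_d) (b : 'I_d), Sigma xi ->
    partial b (gamma_v V X) xi
      * (2 * gamma_v V X xi * derive1n 2 F (gamma_v V X xi)
         + derive1 F (gamma_v V X xi)) = 0.
Proof.
move=> oS oM [Vs Va1 Va2 Vsym] XM Xs gpos F2 EL xi b Sxi.
have Xd : forall eta al, Sigma eta -> differentiable (fun e => X e 0 al) eta.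
  by move=> eta al Se; exact: (Xs al [::] eta Se).
have Pfun : forall c al, (fun e => dX X e c al) = partial c (fun e => X e 0 al).
  by move=> c al; apply/funext => e; rewrite /dX mxE.
have Pd : forall eta c al, Sigma eta -> differentiable (fun e => dX X e c al) eta.
  by move=> eta c al Se; rewrite Pfun; exact: (Xs al [:: c] eta Se).
have XdV : forall eta v, Sigma eta -> derivable X eta v.
  move=> eta v Se; apply: (derivable_mxP X eta v).2 => i j.
  by rewrite (ord1 i); exact: diff_derivable (Xd eta j Se).
have PdV : forall eta v, Sigma eta -> derivable (dX X) eta v.
  move=> eta v Se; apply: (derivable_mxP (dX X) eta v).2 => i j.
  exact: diff_derivable (Pd eta i j Se).
have DXe : forall v al, 'D_v X xi 0 al = 'D_v (fun e => X e 0 al) xi.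
  by move=> v al; rewrite derive_mx ?mxE //; exact: XdV.
have DPe : forall v c al, 'D_v (dX X) xi c al = 'D_v (fun e => dX X e c al) xi.
  by move=> v c al; rewrite derive_mx ?mxE //; exact: PdV.
have Vd : forall eta mu nu, Sigma eta -> differentiable (V mu nu) (X eta).
  by move=> eta mu nu Se; exact: (Vs mu nu [::] (X eta) (XM eta Se)).
have Fd : forall eta, Sigma eta -> derivable F (gamma_v V X eta) 1.
  by move=> eta Se; have [] := F2 _ (gpos eta Se).
have F1d : derivable (derive1 F) (gamma_v V X xi) 1.
  by have [] := F2 _ (gpos xi Sxi).
have Dg := fun v => Dg_formula V (XdV xi v Sxi) (PdV xi v Sxi) (fun mu nu => Vd xi mu nu Sxi).
have nS : nbhs xi Sigma by apply: open_nbhs_nbhs; split.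
have EL' : forall al, derive1 F (gamma_v V X xi) * Gx V al (X xi) (dX X xi) -
   \sum_a (derive1 F (gamma_v V X xi) *
            'D_(ebasis R a) (fun e => Hc V a al (X e) (dX X e)) xi +
           Hc V a al (X xi) (dX X xi) *
            ('D_(ebasis R a) (gamma_v V X) xi * derive1 (derive1 F) (gamma_v V X xi))) = 0.
  move=> al; rewrite -[RHS](EL xi al Sxi); congr (_ - _).
    by rewrite dL_dX_E //; [move=> mu nu; exact: Vd | exact: Fd].
  apply: eq_bigr => a _; rewrite partialE.
  rewrite (@near_eq_derive _ _ _
     (fun eta => dL_ddX (lagr F V) a al (X eta) (dX X eta))
     (fun eta => derive1 F (gamma_v V X eta) * Hc V a al (X eta) (dX X eta)) xi (ebasis R a)); last first.
    by apply: filterS nS => eta Se; exact: dL_ddX_E (Fd eta Se).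
  have [cd1 cd2] := chain_derive (derive1 F) (gamma_v V X) xi (ebasis R a)
      (Dg (ebasis R a)).1 ((derivable1_diffP _ _).1 F1d).
  have dH := Hh_derivable V a al (XdV xi (ebasis R a) Sxi) (PdV xi (ebasis R a) Sxi)
      (fun mu nu => Vd xi mu nu Sxi).
  rewrite (@deriveM' _ _ (fun e => derive1 F (gamma_v V X e))
      (fun e => Hc V a al (X e) (dX X e)) xi (ebasis R a) cd1 dH).
  congr (_ + _); congr (_ * _).
  have -> : 'D_(ebasis R a) (fun e => derive1 F (gamma_v V X e)) xi =
            'D_(ebasis R a) (derive1 F \o gamma_v V X) xi by [].
  by rewrite cd2 (deriv1E F1d).
have Hom : forall a, \sum_al (dX X xi b al *
      'D_(ebasis R a) (fun e => Hc V a al (X e) (dX X e)) xi +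
    Hc V a al (X xi) (dX X xi) * 'D_(ebasis R a) (fun e => dX X e b al) xi) =
    2 * (a == b)%:R * 'D_(ebasis R a) (gamma_v V X) xi.
  move=> a.
  have dterm : forall al, derivable (fun e => dX X e b al * Hc V a al (X e) (dX X e))
      xi (ebasis R a).
    move=> al.
    apply: (@derivableM' _ _ (fun e => dX X e b al) (fun e => Hc V a al (X e) (dX X e))).
      exact: diff_derivable (Pd xi b al Sxi).
    exact: (Hh_derivable V a al (XdV xi (ebasis R a) Sxi) (PdV xi (ebasis R a) Sxi)
      (fun mu nu => Vd xi mu nu Sxi)).
  have [_ Ds] := @D_sum _ _ _ (fun al e => dX X e b al * Hc V a al (X e) (dX X e)) xi (ebasis R a) dterm.
  have E : (fun e => \sum_al dX X e b al * Hc V a al (X e) (dX X e)) =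
           (fun e => 2 * (a == b)%:R * gamma_v V X e).
    by apply/funext => e; rewrite homog_H.
  have Ds' : 'D_(ebasis R a) (fun e => 2 * (a == b)%:R * gamma_v V X e) xi =
      \sum_al 'D_(ebasis R a) (fun e => dX X e b al * Hc V a al (X e) (dX X e)) xi.
    by rewrite -E; exact: Ds.
  rewrite (@deriveM' _ _ (fun _ => 2 * (a == b)%:R) (gamma_v V X) xi (ebasis R a)) in Ds'.
  - rewrite derive_cst' mulr0 addr0 in Ds'; rewrite Ds'.
    apply: eq_bigr => al _.
    rewrite (@deriveM' _ _ (fun e => dX X e b al) (fun e => Hc V a al (X e) (dX X e))).
    + by rewrite addrC.
    + exact: diff_derivable (Pd xi b al Sxi).
    exact: (Hh_derivable V a al (XdV xi (ebasis R a) Sxi) (PdV xi (ebasis R a) Sxi)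
      (fun mu nu => Vd xi mu nu Sxi)).
  - exact: derivable_cst'.
  exact: (Dg (ebasis R a)).1.
have Hom0 : forall a, \sum_al dX X xi b al * Hc V a al (X xi) (dX X xi) =
    2 * (a == b)%:R * gamma_v V X xi.
  by move=> a; exact: homog_H.
have Ch : 'D_(ebasis R b) (gamma_v V X) xi =
    \sum_al dX X xi b al * Gx V al (X xi) (dX X xi) +
    \sum_c \sum_al 'D_(ebasis R b) (fun e => dX X e c al) xi * Hc V c al (X xi) (dX X xi).
  rewrite (Dg (ebasis R b)).2; congr (_ + _).
    by apply: eq_bigr => al _; rewrite DXe -partialE /dX mxE.
  by apply: eq_bigr => c _; apply: eq_bigr => al _; rewrite DPe.
have Sch : forall c al, 'D_(ebasis R b) (fun e => dX X e c al) xi =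
                        'D_(ebasis R c) (fun e => dX X e b al) xi.
  move=> c al; rewrite -!partialE !Pfun.
  exact: (schwarz oS Sxi (fun y Sy => Xd y al Sy) (Xs al [:: c] xi Sxi) (Xs al [:: b] xi Sxi)).
have -> : derive1n 2 F = derive1 (derive1 F) by rewrite derive1nS derive1n1.
rewrite partialE.
exact: (final_alg b (fun al => dX X xi b al)
  (fun al => Gx V al (X xi) (dX X xi))
  (fun a al => 'D_(ebasis R a) (fun e => Hc V a al (X e) (dX X e)) xi)
  (fun a al => Hc V a al (X xi) (dX X xi))
  (fun a c al => 'D_(ebasis R a) (fun e => dX X e c al) xi)
  (fun a => 'D_(ebasis R a) (gamma_v V X) xi)
  (derive1 F (gamma_v V X xi)) (derive1 (derive1 F) (gamma_v V X xi)) (gamma_v V X xi)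
  EL' Hom Hom0 Ch Sch).
Qed.
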